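(* Work in IST. Let $\varepsilon>0$ be infinitesimal, $f:\mathbb{R}\to\mathbb{R}$ $C^1$-limited, $h:\mathbb{R}^2\to\mathbb{R}$ $C^1$-limited and never vanishing, and $g:\mathbb{R}^2\to\mathbb{R}$ of class $C^1$ with $\inf g>0$ and $\inf g$ not infinitesimal. Consider $$\frac{dx}{dt}=h(x,y),\qquad \frac{dy}{dt}=\frac{1}{\varepsilon}g(x,y)\big(f(x)-y\big).$$ Let $(x_0,y_0)$ be a limited point not in the halo of the graph of $f$, and let $(x(t),y(t))$ be the solution with $(x(0),y(0))=(x_0,y_0)$. Then there exists $t^*>0$ such that: (1) $t^*\sim0$; (2) $x(t)\sim x_0$ for all $t\in[0,t^*]$; (3) $y(t^* )\sim f(x_0)$; (4) for every limited $t>t^*$, $y(t)\sim f(x(t))$.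
   Context: Nonstandard vocabulary (IST): infinitesimal = absolute value smaller than every standard positive real; limited = bounded in absolute value by some standard real; $a\sim b$ means $a-b$ infinitesimal; the halo of a set $E\subset\mathbb{R}^2$ is the set of points infinitely close to some point of $E$. A function is $C^1$-limited if it and its (partial) derivatives are bounded by a limited constant. *)

(* Defs.v *)
From Stdlib Require Import Reals.
From Coquelicot Require Import Coquelicot.
Open Scope R_scope.

Definition C1_limited_1 (M : R) (f : R -> R) : Prop :=
  exists f' : R -> R,
    (forall x, is_derive f x (f' x)) /\
    (forall x, continuous f' x) /\
    (forall x, Rabs (f x) <= M /\ Rabs (f' x) <= M).

Definition partials_C1 (u ux uy : R -> R -> R) : Prop :=
  forall x y,
    is_derive (fun s => u s y) x (ux x y) /\
    is_derive (fun s => u x s) y (uy x y) /\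
    continuous (fun p : R * R => ux (fst p) (snd p)) (x, y) /\
    continuous (fun p : R * R => uy (fst p) (snd p)) (x, y).

Definition C1_2 (u : R -> R -> R) : Prop :=
  exists ux uy, partials_C1 u ux uy.

Definition C1_limited_2 (M : R) (u : R -> R -> R) : Prop :=
  exists ux uy, partials_C1 u ux uy /\
    forall x y, Rabs (u x y) <= M /\ Rabs (ux x y) <= M /\ Rabs (uy x y) <= M.

Definition is_solution (eps : R) (f : R -> R) (h g : R -> R -> R)
    (x0 y0 : R) (x y : R -> R) : Prop :=
  (forall t, 0 < t ->
     is_derive x t (h (x t) (y t)) /\
     is_derive y t (/ eps * g (x t) (y t) * (f (x t) - y t))) /\
  x 0 = x0 /\ y 0 = y0 /\
  filterlim x (at_right 0) (locally x0) /\
  filterlim y (at_right 0) (locally y0).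

(* Main.v *)
Require Import Defs.
From Stdlib Require Import Reals Lra Psatz Classical.
From Coquelicot Require Import Coquelicot.
Open Scope R_scope.

Lemma der_cont F x l : is_derive F x l -> continuity_pt F x.
Proof. intros H. apply continuity_pt_filterlim. apply (ex_derive_continuous F x). exists l; exact H. Qed.

Lemma mvt_up F dF s t a : 0 < s -> s < t -> (forall u, 0<u -> is_derive F u (dF u)) ->
  (forall u, s<u<t -> dF u <= a) -> F t - F s <= a*(t-s).
Proof.
  intros Hs Hst HD Hb.
  destruct (MVT_cor2 F dF s t) as [c [Hc Hc2]]; auto.
  - intros c Hc. apply is_derive_Reals. apply HD. lra.
  - rewrite Hc. apply Rmult_le_compat_r; [lra| apply Hb; lra].
Qed.

Lemma rc_of F l : filterlim F (at_right 0) (locally l) ->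
  forall e, 0<e -> exists d, 0<d /\ forall s, 0<s<d -> Rabs (F s - l) < e.
Proof.
  intros H e He.
  assert (Hl : locally l (fun z => Rabs (z - l) < e)).
  { exists (mkposreal e He). intros z Hz. exact Hz. }
  destruct (H _ Hl) as [d Hd]. exists d; split. apply cond_pos.
  intros s Hs. apply Hd; [|lra].
  change (Rabs (s - 0) < d). rewrite Rminus_0_r, Rabs_pos_eq; lra.
Qed.

Lemma cont_of F x : continuity_pt F x ->
  forall e, 0<e -> exists d, 0<d /\ forall s, Rabs (s - x) < d -> Rabs (F s - F x) < e.
Proof.
  intros H e He. apply continuity_pt_filterlim in H.
  assert (Hl : locally (F x) (fun z => Rabs (z - F x) < e)).
  { exists (mkposreal e He). intros z Hz. exact Hz. }
  destruct (H _ Hl) as [d Hd]. exists d; split. apply cond_pos.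
  intros s Hs. apply Hd. exact Hs.
Qed.

Lemma mono0 F dF t a : 0 < t -> (forall u, 0<u -> is_derive F u (dF u)) ->
  (forall u, 0<u<t -> dF u <= a) -> filterlim F (at_right 0) (locally (F 0)) ->
  F t - F 0 <= a*t.
Proof.
  intros Ht HD Hb Hl.
  destruct (Rle_dec (F t - F 0) (a*t)) as [ok|nok]; [exact ok|exfalso].
  set (e := (F t - F 0 - a*t)/2).
  assert (He : 0 < e) by (unfold e; lra).
  destruct (rc_of F (F 0) Hl e He) as [d [Hd Hd2]].
  set (s := Rmin (Rmin (d/2) (t/2)) (e/(Rabs a + 1))).
  assert (Ha : 0 <= Rabs a) by apply Rabs_pos.
  assert (Hs1 : s <= d/2) by (unfold s; apply Rle_trans with (Rmin (d/2) (t/2)); [apply Rmin_l|apply Rmin_l]).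
  assert (Hs2 : s <= t/2) by (unfold s; apply Rle_trans with (Rmin (d/2) (t/2)); [apply Rmin_l|apply Rmin_r]).
  assert (Hs3 : s <= e/(Rabs a + 1)) by (unfold s; apply Rmin_r).
  assert (Hs0 : 0 < s).
  { unfold s. repeat apply Rmin_glb_lt; try lra. apply Rdiv_lt_0_compat; lra. }
  assert (Has : Rabs a * s <= e).
  { apply Rle_trans with (Rabs a * (e/(Rabs a + 1))). apply Rmult_le_compat_l; lra.
    unfold Rdiv. rewrite <- Rmult_assoc. apply Rle_trans with ((Rabs a + 1) * e * / (Rabs a + 1)).
    apply Rmult_le_compat_r. left; apply Rinv_0_lt_compat; lra. nra.
    right. field. lra. }
  assert (Hm := mvt_up F dF s t a Hs0 ltac:(lra) HD (fun u Hu => Hb u ltac:(lra))).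
  assert (H2 := Hd2 s ltac:(lra)).
  apply Rabs_def2 in H2.
  assert (-Rabs a <= a) by (pose proof (Rle_abs (-a)) as Q; rewrite Rabs_Ropp in Q; lra).
  assert (- Rabs a * s <= a * s) by nra.
  unfold e in *. lra.
Qed.
Lemma decay V dV c r t : 0<r -> 0 <= c -> 0 < t ->
  (forall u, 0<u -> is_derive V u (dV u)) ->
  (forall u, 0<u -> c < V u -> dV u <= -r) ->
  filterlim V (at_right 0) (locally (V 0)) -> V t <= Rmax c (V 0 - r*t).
Proof.
  intros Hr Hc Ht HD Hb Hl.
  destruct (Rle_dec (V t) c) as [ok|nok]. { apply Rle_trans with c; [exact ok|apply Rmax_l]. }
  destruct (classic (exists u, 0<u<=t /\ V u <= c)) as [[u0 Hu0]|Hno].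
  - set (A := fun u => 0<u<=t /\ V u <= c).
    destruct (completeness A) as [s [Hs1 Hs2]].
    { exists t. intros u Hu. apply Hu. }
    { exists u0. exact Hu0. }
    assert (Hst : s <= t) by (apply Hs2; intros u Hu; apply Hu).
    assert (Hs0 : 0 < s) by (assert (u0 <= s) by (apply Hs1; exact Hu0); lra).
    assert (HVs : V s <= c).
    { destruct (Rle_dec (V s) c) as [o|n]; [exact o|exfalso].
      destruct (cont_of V s (der_cont V s (dV s) (HD s Hs0)) (V s - c) ltac:(lra)) as [d [Hd Hd2]].
      destruct (classic (exists u, A u /\ s - d < u)) as [[u [Hu1 Hu2]]|Hn].
      + assert (u <= s) by (apply Hs1; exact Hu1).
        assert (Q := Hd2 u ltac:(apply Rabs_def1; lra)). apply Rabs_def2 in Q.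
        destruct Hu1. lra.
      + assert (s <= s - d). { apply Hs2. intros u Hu. destruct (Rle_dec u (s-d)) as [o|n']; [exact o|].
          exfalso. apply Hn. exists u. split; [exact Hu|lra]. }
        lra. }
    assert (Hst' : s < t) by (destruct Hst; [exact H| subst; lra]).
    assert (Hm := mvt_up V dV s t (-r) Hs0 Hst' HD).
    assert (Hm' : V t - V s <= -r * (t - s)).
    { apply Hm. intros u Hu. apply Hb. lra.
      destruct (Rlt_dec c (V u)) as [o|n]; [exact o|exfalso].
      assert (u <= s) by (apply Hs1; split; lra). lra. }
    nra.
  - assert (Q := mono0 V dV t (-r) Ht HD).
    assert (Q' : V t - V 0 <= -r * t).
    { apply Q; [|exact Hl]. intros u Hu. apply Hb; [lra|].
      destruct (Rlt_dec c (V u)) as [o|n]; [exact o|exfalso].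
      apply Hno. exists u. split; lra. }
    apply Rle_trans with (V 0 - r*t); [lra|apply Rmax_r].
Qed.
Lemma lip_f f f' M : (forall x, is_derive f x (f' x)) -> (forall x, Rabs (f' x) <= M) ->
  forall a b, Rabs (f b - f a) <= M * Rabs (b - a).
Proof.
  intros HD Hb a b.
  destruct (MVT_gen f a b f') as [c [_ Hc]].
  - intros; apply HD.
  - intros; apply (der_cont f x (f' x)), HD.
  - rewrite Hc, Rabs_mult. apply Rmult_le_compat_r; [apply Rabs_pos|apply Hb].
Qed.

Lemma derV (x y : R -> R) f f' (dx dy : R) t :
  is_derive x t dx -> is_derive y t dy -> is_derive f (x t) (f' (x t)) ->
  is_derive (fun u => (y u - f (x u))^2) t (2 * (y t - f (x t)) * (dy - f' (x t) * dx)).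
Proof.
  intros Hx Hy Hf.
  assert (Hz : is_derive (fun u => y u - f (x u)) t (dy - f' (x t) * dx)).
  { apply (is_derive_minus y (fun u => f (x u))). exact Hy.
    assert (Q := is_derive_comp f x t (f' (x t)) dx Hf Hx).
    replace (f' (x t) * dx) with (scal dx (f' (x t))); [exact Q|].
    unfold scal; simpl; unfold mult; simpl; ring. }
  assert (Q := is_derive_pow _ 2 t _ Hz).
  replace (2 * (y t - f (x t)) * (dy - f' (x t) * dx)) with
    (INR 2 * (dy - f' (x t) * dx) * (y t - f (x t)) ^ Init.Nat.pred 2); [exact Q|].
  simpl. ring.
Qed.

Lemma limV (x y : R -> R) f x0 y0 :
  filterlim x (at_right 0) (locally x0) -> filterlim y (at_right 0) (locally y0) ->
  continuous f x0 ->
  filterlim (fun u => (y u - f (x u))^2) (at_right 0) (locally ((y0 - f x0)^2)).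
Proof.
  intros Hx Hy Hf.
  assert (Hfx : filterlim (fun u => f (x u)) (at_right 0) (locally (f x0))).
  { apply filterlim_comp with (locally x0); assumption. }
  assert (Hmf : filterlim (fun u => opp (f (x u))) (at_right 0) (locally (opp (f x0)))).
  { apply filterlim_comp with (locally (f x0)); [exact Hfx|apply (@filterlim_opp R_AbsRing R_NormedModule)]. }
  assert (Hz : filterlim (fun u => plus (y u) (opp (f (x u)))) (at_right 0) (locally (plus y0 (opp (f x0))))).
  { apply (filterlim_comp_2 y (fun u => opp (f (x u))) plus Hy Hmf). apply (@filterlim_plus R_AbsRing R_NormedModule). }
  assert (Hsq : continuous (fun z : R => z^2) (y0 - f x0)).
  { apply (@ex_derive_continuous R_AbsRing R_NormedModule). auto_derive. exact I. }
  exact (filterlim_comp _ _ _ (fun u => y u - f (x u)) (fun z : R => z^2) (at_right 0) (locally (y0 - f x0)) _ Hz Hsq).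
Qed.
Theorem mainTheorem9 :
  forall (M m delta eta T : R),
    0 < m -> 0 < delta -> 0 < eta ->
    exists eps0 : R, 0 < eps0 /\
      forall (eps : R) (f : R -> R) (h g : R -> R -> R) (x0 y0 : R)
             (x y : R -> R),
        0 < eps < eps0 ->
        C1_limited_1 M f ->
        C1_limited_2 M h ->
        (forall a b, h a b <> 0) ->
        C1_2 g ->
        (forall a b, m <= g a b) ->
        Rabs x0 <= M -> Rabs y0 <= M ->
        (forall u, delta <= sqrt ((x0 - u) ^ 2 + (y0 - f u) ^ 2)) ->
        is_solution eps f h g x0 y0 x y ->
        exists ts : R, 0 < ts /\ ts < eta /\
          (forall t, 0 <= t <= ts -> Rabs (x t - x0) < eta) /\
          Rabs (y ts - f x0) < eta /\
          (forall t, ts < t <= T -> Rabs (y t - f (x t)) < eta).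
Proof.
  intros M m delta eta T Hm Hdl He.
  set (b := eta/2).
  assert (Hb : 0 < b) by (unfold b; lra).
  set (L := (4*M^2+1)/(m*b^2)).
  assert (HL : 0 < L).
  { unfold L. pose proof (pow2_ge_0 M). apply Rdiv_lt_0_compat; [lra|]. apply Rmult_lt_0_compat; [lra|apply pow_lt; lra]. }
  set (Q := 1 + M^2).
  assert (HQ : 1 <= Q) by (unfold Q; pose proof (pow2_ge_0 M); lra).
  exists (Rmin (eta/(4*L*Q)) (m*b/(2*Q))).
  split. { apply Rmin_glb_lt; apply Rdiv_lt_0_compat; nra. }
  intros eps f h g x0 y0 x y Heps Hf Hh _ _ Hgm Hx0 Hy0 _ Hsol.
  destruct Hf as [f' [Hf1 [_ Hf3]]].
  destruct Hh as [hx [hy [_ Hhb]]].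
  destruct Hsol as [Hder [Hx0e [Hy0e [Hxl Hyl]]]].
  assert (HM : 0 <= M) by (pose proof (Rabs_pos x0); lra).
  assert (He1 : eps < eta/(4*L*Q)) by (apply Rlt_le_trans with (1 := proj2 Heps); apply Rmin_l).
  assert (He2 : eps < m*b/(2*Q)) by (apply Rlt_le_trans with (1 := proj2 Heps); apply Rmin_r).
  set (ts := eps * L).
  assert (Hts : 0 < ts) by (unfold ts; nra).
  assert (HtsQ : ts * Q < eta/4).
  { unfold ts. apply Rmult_lt_compat_r with (r := 4*L*Q) in He1; [|nra].
    replace (eta / (4 * L * Q) * (4 * L * Q)) with eta in He1 by (field; nra). nra. }
  assert (HepsQ : 2 * eps * Q < m * b).
  { apply Rmult_lt_compat_r with (r := 2*Q) in He2; [|nra].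
    replace (m * b / (2 * Q) * (2 * Q)) with (m*b) in He2 by (field; nra). nra. }
  assert (HMQ : M <= Q) by (unfold Q; nra).
  assert (HM2Q : M^2 <= Q) by (unfold Q; nra).
  assert (Hxlip : forall t, 0 <= t -> Rabs (x t - x0) <= M * t).
  { intros t Ht. destruct Ht as [Ht|Ht]; [|rewrite <- Ht, Hx0e, Rminus_diag, Rabs_R0; lra].
    assert (HDx : forall u, 0 < u -> is_derive x u (h (x u) (y u))) by (intros u Hu; apply (Hder u Hu)).
    assert (HB : forall u, Rabs (h (x u) (y u)) <= M) by (intros u; apply Hhb).
    assert (U1 : x t - x 0 <= M * t).
    { apply (mono0 x (fun u => h (x u) (y u))); auto.
      intros u _. pose proof (HB u). pose proof (Rle_abs (h (x u) (y u))). lra.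
      rewrite Hx0e; exact Hxl. }
    assert (U2 : (fun u => - x u) t - (fun u => - x u) 0 <= M * t).
    { apply (mono0 (fun u => - x u) (fun u => - h (x u) (y u))); auto.
      intros u Hu. apply (is_derive_opp x). apply HDx; exact Hu.
      intros u _. pose proof (HB u). pose proof (Rle_abs (- h (x u) (y u))). rewrite Rabs_Ropp in *. lra.
      rewrite Hx0e.
      exact (filterlim_comp _ _ _ x (fun z : R => - z) (at_right 0) (locally x0) _ Hxl
               (@filterlim_opp R_AbsRing R_NormedModule x0)). }
    simpl in U2. rewrite Hx0e in U1, U2. apply Rabs_le. lra. }
  set (V := fun u => (y u - f (x u))^2).
  set (dV := fun u => 2 * (y u - f (x u)) *
      (/ eps * g (x u) (y u) * (f (x u) - y u) - f' (x u) * h (x u) (y u))).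
  set (r := m * b^2 / eps).
  assert (Hr : 0 < r) by (unfold r; apply Rdiv_lt_0_compat; [apply Rmult_lt_0_compat; [lra|apply pow_lt; lra]|lra]).
  assert (HDV : forall u, 0 < u -> is_derive V u (dV u)).
  { intros u Hu. destruct (Hder u Hu) as [D1 D2]. apply derV; auto. }
  assert (HbV : forall u, 0 < u -> b^2 < V u -> dV u <= -r).
  { intros u _ Hu. unfold V, dV, r in *.
    set (z := y u - f (x u)) in *.
    set (G := g (x u) (y u)). set (P := f' (x u) * h (x u) (y u)).
    assert (HG : m <= G) by apply Hgm.
    assert (HP : Rabs P <= M^2).
    { unfold P. rewrite Rabs_mult. simpl. rewrite Rmult_1_r.
      apply Rmult_le_compat; try apply Rabs_pos. apply (Hf3 (x u)). apply (Hhb (x u) (y u)). }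
    assert (Hz : b < Rabs z).
    { destruct (Rlt_dec b (Rabs z)) as [o|n]; [exact o|exfalso].
      rewrite <- (pow2_abs z) in Hu. pose proof (Rabs_pos z). nra. }
    assert (Hz2 : z^2 = Rabs z ^2) by (rewrite pow2_abs; auto).
    assert (Hyz : f (x u) - y u = - z) by (unfold z; ring).
    rewrite Hyz. clearbody z G P.
    assert (HzP : - (Rabs z * M^2) <= z * P).
    { pose proof (Rle_abs (-(z*P))). rewrite Rabs_Ropp, Rabs_mult in H.
      pose proof (Rabs_pos z). nra. }
    assert (Hkey : - 2 * G * z^2 - 2 * eps * z * P <= - m * b^2).
    { pose proof (pow2_ge_0 z) as Pz. pose proof (Rabs_pos z) as Pa.
      assert (E1 : - 2 * G * z^2 <= - 2 * m * z^2).
      { replace (- 2 * G * z^2) with (-2 * (G * z^2)) by ring. replace (- 2 * m * z^2) with (-2 * (m * z^2)) by ring. apply Rmult_le_compat_neg_l; [lra|]. apply Rmult_le_compat_r; lra. }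
      assert (E2 : - 2 * eps * z * P <= 2 * eps * Rabs z * M^2).
      { replace (- 2 * eps * z * P) with ((2*eps) * (-(z*P))) by ring. replace (2 * eps * Rabs z * M^2) with ((2*eps)*(Rabs z * M^2)) by ring. apply Rmult_le_compat_l; lra. }
      assert (E3 : 2 * eps * M^2 <= m * b) by (apply Rle_trans with (2*eps*Q); [apply Rmult_le_compat_l; lra | lra]).
      assert (E4 : 2 * eps * Rabs z * M^2 <= m * b * Rabs z).
      { replace (2 * eps * Rabs z * M^2) with (2 * eps * M^2 * Rabs z) by ring. apply Rmult_le_compat_r; lra. }
      assert (E5 : m * b * Rabs z <= m * z^2).
      { rewrite Hz2. replace (m*b*Rabs z) with (m*(b*Rabs z)) by ring. replace (m * Rabs z ^2) with (m*(Rabs z * Rabs z)) by ring. apply Rmult_le_compat_l; [lra|]. apply Rmult_le_compat_r; lra. }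
      assert (E6 : m * b^2 <= m * z^2).
      { rewrite Hz2. replace (m*b^2) with (m*(b*b)) by ring. replace (m * Rabs z ^2) with (m*(Rabs z * Rabs z)) by ring. apply Rmult_le_compat_l; [lra|]. apply Rmult_le_compat; lra. }
      lra. }
    replace (2 * z * (/ eps * G * - z - P)) with
      ((- 2 * G * z^2 - 2 * eps * z * P) / eps) by (field; lra).
    replace (- (m * b ^ 2 / eps)) with ((- m * b^2) / eps) by (field; lra).
    apply Rmult_le_compat_r; [left; apply Rinv_0_lt_compat; lra| exact Hkey]. }
  assert (HlV : filterlim V (at_right 0) (locally (V 0))).
  { unfold V. rewrite Hx0e, Hy0e. apply limV; auto.
    apply (@ex_derive_continuous R_AbsRing R_NormedModule). exists (f' x0). apply Hf1. }
  assert (HV0 : V 0 <= 4 * M^2).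
  { unfold V. rewrite Hx0e, Hy0e. rewrite <- pow2_abs.
    assert (Rabs (y0 - f x0) <= 2*M).
    { apply Rle_trans with (Rabs y0 + Rabs (f x0)). unfold Rminus. rewrite <- (Rabs_Ropp (f x0)). apply Rabs_triang.
      pose proof (proj1 (Hf3 x0)). lra. }
    pose proof (Rabs_pos (y0 - f x0)). nra. }
  assert (Hafter : forall t, ts <= t -> Rabs (y t - f (x t)) <= b).
  { intros t Ht.
    assert (D := decay V dV (b^2) r t Hr ltac:(nra) ltac:(lra) HDV HbV HlV).
    assert (Hrt : V 0 - r * t <= b^2).
    { assert (r * ts = 4*M^2+1).
      { unfold r, ts, L. field. nra. }
      assert (r * ts <= r * t) by nra. nra. }
    assert (V t <= b^2).
    { apply Rle_trans with (1 := D). apply Rmax_lub; lra. }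
    unfold V in H. rewrite <- pow2_abs in H.
    destruct (Rle_dec (Rabs (y t - f (x t))) b) as [o|n]; [exact o|exfalso]. nra. }
  exists ts. split; [exact Hts|]. split; [nra|]. split; [|split].
  - intros t [Ht1 Ht2]. apply Rle_lt_trans with (M * t). apply Hxlip; lra. nra.
  - assert (A1 := Hafter ts (Rle_refl _)).
    assert (A2 := lip_f f f' M Hf1 (fun z => proj2 (Hf3 z)) x0 (x ts)).
    assert (A3 := Hxlip ts ltac:(lra)).
    replace (y ts - f x0) with ((y ts - f (x ts)) + (f (x ts) - f x0)) by ring.
    apply Rle_lt_trans with (Rabs (y ts - f (x ts)) + Rabs (f (x ts) - f x0)); [apply Rabs_triang|].
    assert (M * Rabs (x ts - x0) <= M * (M * ts)) by (apply Rmult_le_compat_l; lra).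
    unfold b in *. nra.
  - intros t [Ht1 _]. apply Rle_lt_trans with b; [apply Hafter; lra|unfold b; lra].
Qed.
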